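(* Let $\lambda$ be a partition, $\nu\in\mathcal{U}(\lambda)$, $(x,y)=\nu/\lambda$, and let $u,v\ge1$ be integers. (1) If $c=(x+u,y)$, then \[ P^{q,t}_\lambda(\nu\mid c)=t^{\ell_\lambda(c)}\frac{1-q}{1-q^{a_\nu(c)+1}t^{\ell_\nu(c)}}\prod_{c'\in{\rm arm}_\lambda(c)\setminus\{\nu/\lambda\}}\frac{1-q^{a_\lambda(c')+1}t^{\ell_\lambda(c')}}{1-q^{a_\nu(c')+1}t^{\ell_\nu(c')}}. \] (2) If $c=(x,y+v)$, then \[ P^{q,t}_\lambda(\nu\mid c)=\frac{1-t}{1-q^{a_\nu(c)}t^{\ell_\nu(c)+1}}\prod_{c''\in{\rm leg}_\lambda(c)\setminus\{\nu/\lambda\}}\frac{1-q^{a_\lambda(c'')}t^{\ell_\lambda(c'')+1}}{1-q^{a_\nu(c'')}t^{\ell_\nu(c'')+1}}. \]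
   Context: Partitions are Young diagrams in French convention: cells $(x,y)\in\mathbb{Z}_{>0}^2$ with $x\le\lambda_y$; $\lambda'$ is the conjugate, with $\lambda_j=0$ for $j>\lambda'_1$, $\lambda'_i=0$ for $i>\lambda_1$. $\mathcal{U}(\lambda)$ is the set of partitions obtained by adding one cell to $\lambda$. For a partition $\kappa$, $\overline{\kappa}=\mathbb{Z}_{>0}^2\setminus\kappa$, and for $c=(x,y)\in\overline{\kappa}$: ${\rm arm}_\kappa(c)=\{(i,y):\kappa_y<i<x\}$, ${\rm leg}_\kappa(c)=\{(x,j):\kappa'_x<j<y\}$, exterior arm-length $a_\kappa(c)=|{\rm arm}_\kappa(c)|$ and exterior leg-length $\ell_\kappa(c)=|{\rm leg}_\kappa(c)|$ (all arm/leg lengths in the statement are these exterior ones; the relevant cells lie outside both $\lambda$ and $\nu$). $c\in\overline{\lambda}$ is an outer corner iff $a_\lambda(c)=\ell_\lambda(c)=0$. For $c'\in{\rm arm}_\lambda(c)\cup{\rm leg}_\lambda(c)$, $P(c\rightarrow c')=q^{a_\lambda(c)-i}\frac{t^{\ell_\lambda(c)}(1-q)}{1-q^{a_\lambda(c)}t^{\ell_\lambda(c)}}$ if $c'=(x-i,y)$, and $P(c\rightarrow c')=t^{j-1}\frac{1-t}{1-q^{a_\lambda(c)}t^{\ell_\lambda(c)}}$ if $c'=(x,y-j)$. The exterior $(q,t)$-hook walk from $c$ terminates if $c$ is an outer corner, otherwise moves to $c'$ with probability $P(c\rightarrow c')$ and repeats; $P^{q,t}_\lambda(\nu\mid c)$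 is the probability (a rational function in $q,t$) that it terminates at the cell $\nu/\lambda$. *)

(* Defs.v *)
From HB Require Import structures.
From mathcomp Require Import all_boot all_order all_algebra.
From mathcomp Require Import fraction.
Set Implicit Arguments. Unset Strict Implicit. Unset Printing Implicit Defensive.
Import Order.TTheory GRing.Theory Num.Theory.
Local Open Scope ring_scope.

(* Partitions are represented by their (weakly decreasing, positive) row
   lengths: l = [:: l_1; l_2; ...].  Cells are pairs (x, y) of positive
   integers (French convention: x = column, y = row). *)
Definition is_partition (l : seq nat) : bool :=
  sorted geq l && all (fun r => (0 < r)%N) l.

Definition rowl (l : seq nat) (y : nat) : nat := nth 0%N l y.-1.
Definition coll (l : seq nat) (x : nat) : nat := count (fun r => (x <= r)%N) l.

Definition in_part (l : seq nat) (c : nat * nat) : bool :=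
  [&& (0 < c.1)%N, (0 < c.2)%N & (c.1 <= rowl l c.2)%N].

(* exterior arm and leg (for c outside the partition) *)
Definition arm (l : seq nat) (c : nat * nat) : seq (nat * nat) :=
  [seq (i, c.2) | i <- iota (rowl l c.2).+1 (c.1 - (rowl l c.2).+1)].
Definition leg (l : seq nat) (c : nat * nat) : seq (nat * nat) :=
  [seq (c.1, j) | j <- iota (coll l c.1).+1 (c.2 - (coll l c.1).+1)].
Definition armlen (l : seq nat) (c : nat * nat) : nat := (c.1 - rowl l c.2).-1.
Definition leglen (l : seq nat) (c : nat * nat) : nat := (c.2 - coll l c.1).-1.

Definition adds_cell (l nu : seq nat) (e : nat * nat) : Prop :=
  [/\ is_partition nu, (0 < e.1)%N, (0 < e.2)%N, ~~ in_part l e &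
      forall c, in_part nu c = in_part l c || (c == e)].

Definition K : fieldType := {fraction {poly {poly rat}}}.
Definition qv : K := @FracField.tofrac {poly {poly rat}} (('X : {poly rat})%:P).
Definition tv : K := @FracField.tofrac {poly {poly rat}} 'X.

(* Exterior (q,t)-hook walk, by first-step analysis; the fuel n bounds the
   number of steps (each step decreases x + y). hw l e n c is the probability
   that the walk started at c terminates at the cell e. *)
Fixpoint hw (l : seq nat) (e : nat * nat) (n : nat) (c : nat * nat) : K :=
  match n with
  | 0%N => 0
  | n'.+1 =>
    let a := armlen l c in let b := leglen l c in
    if (a == 0%N) && (b == 0%N) then (c == e)%:R
    else \sum_(1 <= i < a.+1)
            (qv ^+ (a - i) * tv ^+ b * (1 - qv) / (1 - qv ^+ a * tv ^+ b))
              * hw l e n' (c.1 - i, c.2)%N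
       + \sum_(1 <= j < b.+1)
            (tv ^+ j.-1 * (1 - tv) / (1 - qv ^+ a * tv ^+ b))
              * hw l e n' (c.1, c.2 - j)%N
  end.

(* P^{q,t}_lambda(nu | c), where e = nu/lambda *)
Definition hook_prob (l : seq nat) (e c : nat * nat) : K :=
  hw l e (c.1 + c.2) c.

(* Main.v *)
Require Import Defs.
From HB Require Import structures.
From mathcomp Require Import all_boot all_order all_algebra.
From mathcomp Require Import fraction.
From mathcomp Require Import zify ring.
Set Implicit Arguments. Unset Strict Implicit. Unset Printing Implicit Defensive.
Import Order.TTheory GRing.Theory Num.Theory.
Local Open Scope ring_scope.

Lemma hw_zero l e n c : ((c.1 < e.1) || (c.2 < e.2))%N -> hw l e n c = 0.
Proof.
elim: n c => [|n IH] [c1 c2] H //=.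
case: ifP => _.
  case: eqP => // E; move: H; rewrite -E /= !ltnn //.
rewrite [X in X + _]big1 => [|i _]. rewrite add0r big1 // => i _.
all: rewrite IH ?mulr0 //=;
 case/orP: H => H; apply/orP; [left|right];
 by apply: leq_ltn_trans H; rewrite ?leq_subr.
Qed.

Lemma D_neq0 a b : (0 < a + b)%N -> 1 - qv ^+ a * tv ^+ b != 0.
Proof.
move=> Hab.
have -> : 1 - qv ^+ a * tv ^+ b =
  FracField.tofrac (1 - (('X : {poly rat}) ^+ a)%:P * 'X ^+ b : {poly {poly rat}}).
  by rewrite tofracB tofrac1 tofracM !tofracXn polyC_exp tofracXn.
rewrite tofrac_eq0 subr_eq0; apply/eqP => /(congr1 (fun p : {poly {poly rat}} => p`_b)).
rewrite coefCM coefXn eqxx coef1 mulr1.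
case: b Hab => [|b] Hab /=.
  rewrite addn0 in Hab; move/(congr1 (fun p : {poly rat} => size p)).
  by rewrite size_polyXn size_poly1; case: a Hab.
by move/eqP; rewrite eq_sym expf_eq0 polyX_eq0 andbF.
Qed.

Lemma in_partE l a b : (0 < a)%N -> (0 < b)%N -> in_part l (a, b) = (a <= rowl l b)%N.
Proof. by move=> Ha Hb; rewrite /in_part /= Ha Hb. Qed.

Lemma eq_by_le (m n : nat) : (forall a, (0 < a)%N -> (a <= m)%N = (a <= n)%N) -> m = n.
Proof.
move=> H; case: (ltngtP m n) => // Hmn.
  by have := H n (leq_ltn_trans (leq0n _) Hmn); rewrite leqnn; lia.
by have := H m (leq_ltn_trans (leq0n _) Hmn); rewrite leqnn; lia.
Qed.

Lemma rowl_ne l nu x y y' : adds_cell l nu (x, y) -> (0 < y')%N -> y' != y ->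
  rowl nu y' = rowl l y'.
Proof.
case=> _ _ _ _ H Hy Hne; apply: eq_by_le => a Ha.
by have := H (a, y'); rewrite !in_partE // xpair_eqE (negbTE Hne) andbF orbF.
Qed.

Lemma rowl_y l nu x y : adds_cell l nu (x, y) -> rowl l y = x.-1 /\ rowl nu y = x.
Proof.
case=> _ /= Hx Hy Hnot H.
rewrite in_partE // -ltnNge in Hnot.
have h1 := H (x, y); rewrite eqxx orbT in_partE // in h1.
have h2 := H (x.+1, y); rewrite in_partE // in_partE // xpair_eqE eqn_leq ltnn /= in h2.
have h3 : (x.-1 <= rowl l y)%N.
  move: H; case: x Hx Hnot h1 {h2} => [|[|x]] //= _ Hnot h1 H.
  have := H (x.+1, y); rewrite !in_partE // xpair_eqE eqSS ltn_eqF //= orbF => <-; lia.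
split; lia.
Qed.

Lemma coll_iota l a N : (0 < a)%N -> (size l <= N)%N ->
  coll l a = count (fun k => a <= nth 0%N l k)%N (iota 0 N).
Proof.
move=> Ha HN; rewrite /coll -{1}(mkseq_nth 0%N l) /mkseq count_map.
rewrite -(subnKC HN) iotaD count_cat add0n.
rewrite [X in _ = _ + X](eq_in_count (a2 := pred0)) ?count_pred0 ?addn0 //; last first.
move=> k; rewrite mem_iota => /andP[Hk _] /=.
by rewrite nth_default // leqNgt Ha.
by rewrite [RHS]addn0.
Qed.

Lemma coll_ne l nu x y a : adds_cell l nu (x, y) -> (0 < a)%N -> a != x ->
  coll nu a = coll l a.
Proof.
move=> Hc Ha Hne; case: (Hc) => _ _ _ _ H.
rewrite (@coll_iota nu a (size l + size nu)) ?leq_addl //.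
rewrite (@coll_iota l a (size l + size nu)) ?leq_addr //.
apply: eq_count => k /=.
have := H (a, k.+1); rewrite !in_partE // xpair_eqE (negbTE Hne) /= orbF.
by rewrite /rowl.
Qed.

Lemma nth_sorted (s : seq nat) i j : sorted geq s -> (i <= j)%N ->
  (nth 0%N s j <= nth 0%N s i)%N.
Proof.
move=> Hs Hij; case: (ltnP j (size s)) => Hj; last by rewrite nth_default.
have tr : transitive geq by move=> p q r /= H1 H2; apply: leq_trans H2 H1.
apply: (sorted_leq_nth tr (fun p => leqnn p) 0 Hs) => //; rewrite inE //.
by apply: leq_ltn_trans Hj.
Qed.

Lemma count_sorted (s : seq nat) a m : sorted geq s -> (0 < a)%N ->
  (m = 0%N \/ (a <= nth 0%N s m.-1)%N) -> (nth 0%N s m < a)%N ->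
  count (fun r => a <= r)%N s = m.
Proof.
elim: s m => [|b s IH] m Hs Ha Hm Hlt /=.
  case: Hm => [->//|]; by rewrite nth_nil leqNgt Ha.
have Hall : all (fun r => r <= b)%N s.
  by apply: (order_path_min (leT := geq)) => // p q r /= H1 H2; apply: leq_trans H2 H1.
have Hs' := path_sorted Hs.
case: m Hm Hlt => [|m] /= Hm Hlt.
  rewrite leqNgt Hlt add0n; apply/eqP; rewrite -leqn0 leqNgt -has_count.
  apply/hasPn => r Hr /=; rewrite -ltnNge; apply: leq_ltn_trans Hlt.
  by move/allP: Hall => /(_ r Hr).
have Hab : (a <= b)%N.
  case: Hm => // Hm; case: m Hm Hlt => [|m] //= Hm Hlt.
  case: (ltnP m (size s)) => Hms; last by move: Hm; rewrite nth_default // leqNgt Ha.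
  by apply: leq_trans Hm _; move/allP: Hall; apply; rewrite mem_nth.
rewrite Hab add1n (IH m) //.
case: m Hm Hlt {IH} => [|m] Hm Hlt; [by left | right].
by case: Hm.
Qed.

Lemma coll_x l nu x y : is_partition l -> adds_cell l nu (x, y) ->
  coll l x = y.-1 /\ coll nu x = y.
Proof.
move=> /andP[Hl _] Hc; have [rl rn] := rowl_y Hc.
case: (Hc) => /andP[Hn _] /= Hx Hy _ _.
split.
  apply: count_sorted => //; last by move: rl; rewrite /rowl; lia.
  case: y Hy Hc rl rn => [|[|y]] // _ Hc rl rn; [by left | right] => /=.
  have := rowl_ne Hc (isT : (0 < y.+1)%N) (introN eqP (@n_Sn _)).
  rewrite /rowl /= => <-.
  by rewrite -rn /rowl /=; apply: nth_sorted.
apply: count_sorted => //; first by right; move: rn; rewrite /rowl => ->.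
have := rowl_ne Hc (isT : (0 < y.+1)%N) (introN eqP (@n_Sn _ \o esym)).
rewrite /rowl /= => ->.
have := nth_sorted Hl (leq_pred y); move: rl; rewrite /rowl; lia.
Qed.

Definition L1 l x y i := leglen l (x + i, y)%N.
Definition D1 l x y i : K := 1 - qv ^+ i * tv ^+ L1 l x y i.
Definition P1 l x y i : K :=
  \prod_(1 <= j < i) ((1 - qv ^+ j.+1 * tv ^+ L1 l x y j) / D1 l x y j).
Definition F1 l x y i : K :=
  if i == 0%N then 1 else tv ^+ L1 l x y i * (1 - qv) / D1 l x y i * P1 l x y i.

Lemma alg1 (F : fieldType) (q Q T P : F) : 1 - Q * T != 0 ->
  Q * (T * (1 - q) / (1 - Q * T) * P) + P = P * ((1 - Q * q * T) / (1 - Q * T)).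
Proof. by move=> H; field. Qed.

Lemma S1 l x y i : (0 < i)%N ->
  \sum_(1 <= k < i.+1) qv ^+ (i - k)%N * F1 l x y (i - k)%N = P1 l x y i.
Proof.
elim: i => [//|i IH] _.
case: i IH => [|i] IH.
  by rewrite big_nat1 /P1 big_geq // /F1 /= expr0 mul1r.
rewrite big_nat_recl // subSS subn0.
under eq_bigr do rewrite subSS.
rewrite IH // /F1 /=.
rewrite [RHS]/P1 big_nat_recr //= -/(P1 l x y i.+1) /D1.
by rewrite [qv ^+ i.+2]exprSr alg1 //; apply: D_neq0.
Qed.

Lemma alg2 (F : fieldType) (a b c d e : F) : a * b * c / d * e = b * c / d * (a * e).
Proof. by ring. Qed.

Lemma main1 l x y : rowl l y = x.-1 -> coll l x = y.-1 -> (0 < x)%N -> (0 < y)%N ->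
  forall i n, (i < n)%N -> hw l (x, y) n (x + i, y)%N = F1 l x y i.
Proof.
move=> rl cl Hx Hy i; elim/ltn_ind: i => i IH [//|n] Hin /=.
have Ha : armlen l (x + i, y) = i by rewrite /armlen /= rl; lia.
rewrite Ha -/(L1 l x y i).
case: i IH Hin Ha => [|i] IH Hin Ha.
  have -> : L1 l x y 0 = 0%N by rewrite /L1 /leglen /= addn0 cl; lia.
  by rewrite /= addn0 eqxx.
rewrite /= [X in _ + X]big1_seq ?addr0 => [|j /andP[_ Hj]]; last first.
  by rewrite mem_index_iota in Hj; rewrite hw_zero ?mulr0 //= orbC; lia.
rewrite -/(D1 l x y i.+1).
transitivity (\sum_(1 <= k < i.+2) (tv ^+ L1 l x y i.+1 * (1 - qv) / D1 l x y i.+1) *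
     (qv ^+ (i.+1 - k)%N * F1 l x y (i.+1 - k)%N)).
  apply: eq_big_nat => k /andP[Hk1 Hk2].
  rewrite -addnBA; last by lia.
  rewrite IH; [|lia|lia].
  by apply: alg2.
by rewrite -big_distrr /= S1.
Qed.

Definition Q2 l x y j := armlen l (x, y + j)%N.
Definition E2 l x y j : K := 1 - qv ^+ Q2 l x y j * tv ^+ j.
Definition P2 l x y j : K :=
  \prod_(1 <= m < j) ((1 - qv ^+ Q2 l x y m * tv ^+ m.+1) / E2 l x y m).
Definition F2 l x y j : K :=
  if j == 0%N then 1 else (1 - tv) / E2 l x y j * P2 l x y j.

Lemma alg3 (F : fieldType) (t Q T P : F) : 1 - Q * T != 0 ->
  (1 - t) / (1 - Q * T) * P + t * P = P * ((1 - Q * (T * t)) / (1 - Q * T)).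
Proof. by move=> H; field. Qed.

Lemma S2 l x y j : (0 < j)%N ->
  \sum_(1 <= k < j.+1) tv ^+ k.-1 * F2 l x y (j - k)%N = P2 l x y j.
Proof.
elim: j => [//|j IH] _.
case: j IH => [|j] IH.
  by rewrite big_nat1 /P2 big_geq // /F2 /= expr0 mul1r.
rewrite big_nat_recl // subSS subn0 expr0 mul1r.
transitivity (F2 l x y j.+1 + tv * \sum_(1 <= k < j.+2) tv ^+ k.-1 * F2 l x y (j.+1 - k)%N).
  rewrite big_distrr /=; congr (_ + _); apply: eq_big_nat => k /andP[Hk1 _].
  by rewrite subSS /= mulrA -exprS prednK.
rewrite IH // /F2 /=.
rewrite [RHS]/P2 big_nat_recr //= -/(P2 l x y j.+1) /E2.
by rewrite [tv ^+ j.+2]exprSr alg3 //; apply: D_neq0; rewrite addnS.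
Qed.

Lemma alg4 (F : fieldType) (a b d e : F) : a * b / d * e = b / d * (a * e).
Proof. by ring. Qed.

Lemma main2 l x y : rowl l y = x.-1 -> coll l x = y.-1 -> (0 < x)%N -> (0 < y)%N ->
  forall j n, (j < n)%N -> hw l (x, y) n (x, y + j)%N = F2 l x y j.
Proof.
move=> rl cl Hx Hy j; elim/ltn_ind: j => j IH [//|n] Hin /=.
have Hb : leglen l (x, y + j) = j by rewrite /leglen /= cl; lia.
rewrite Hb -/(Q2 l x y j).
case: j IH Hin Hb => [|j] IH Hin Hb.
  have -> : Q2 l x y 0 = 0%N by rewrite /Q2 /armlen /= addn0 rl; lia.
  by rewrite /= addn0 eqxx.
rewrite andbF /= [X in X + _]big1_seq ?add0r => [|k /andP[_ Hk]]; last first.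
  by rewrite mem_index_iota in Hk; rewrite hw_zero ?mulr0 //=; lia.
rewrite -/(E2 l x y j.+1).
transitivity (\sum_(1 <= k < j.+2) ((1 - tv) / E2 l x y j.+1) *
     (tv ^+ k.-1 * F2 l x y (j.+1 - k)%N)).
  apply: eq_big_nat => k /andP[Hk1 Hk2].
  rewrite -addnBA; last by lia.
  rewrite IH; [|lia|lia].
  by apply: alg4.
by rewrite -big_distrr /= S2.
Qed.

Unset Implicit Arguments.
Set Strict Implicit.
Set Printing Implicit Defensive.

Theorem lemma6p7 (l nu : seq nat) (x y u v : nat) :
  is_partition l -> adds_cell l nu (x, y) -> (1 <= u)%N -> (1 <= v)%N ->
  (let c := (x + u, y)%N in
   hook_prob l (x, y) c =
     tv ^+ leglen l c * (1 - qv)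
       / (1 - qv ^+ (armlen nu c).+1 * tv ^+ leglen nu c)
     * \prod_(c' <- arm l c | c' != (x, y))
         ((1 - qv ^+ (armlen l c').+1 * tv ^+ leglen l c')
          / (1 - qv ^+ (armlen nu c').+1 * tv ^+ leglen nu c')))
  /\
  (let c := (x, y + v)%N in
   hook_prob l (x, y) c =
     (1 - tv) / (1 - qv ^+ armlen nu c * tv ^+ (leglen nu c).+1)
     * \prod_(c'' <- leg l c | c'' != (x, y))
         ((1 - qv ^+ armlen l c'' * tv ^+ (leglen l c'').+1)
          / (1 - qv ^+ armlen nu c'' * tv ^+ (leglen nu c'').+1))).
Proof.
move=> Hl Hc Hu Hv.
have [rl rn] := rowl_y Hc; have [cl cn] := coll_x Hl Hc.
case: (Hc) => _ /= Hx Hy _ _.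
split => /=.
  rewrite /hook_prob /= (main1 rl cl Hx Hy (i := u)); last by lia.
  case: u Hu => [//|u] _; rewrite /F1 /=.
  have -> : armlen nu (x + u.+1, y)%N = u by rewrite /armlen /= rn; lia.
  have -> : leglen nu (x + u.+1, y)%N = L1 l x y u.+1.
    by rewrite /leglen /L1 /= (coll_ne Hc) //; lia.
  rewrite /D1 /L1; congr (_ * _).
  rewrite /arm /= rl prednK // addKn big_map /= big_cons eqxx /=.
  symmetry; rewrite -[x.+1]addn1 iotaDl big_map /P1.
  have -> : index_iota 1 u.+1 = iota 1 u by rewrite /index_iota subn1.
  rewrite big_seq_cond [RHS]big_seq_cond; apply: eq_big => [j|j /andP[Hj _]].
    rewrite mem_iota xpair_eqE eqxx !andbT.
    by apply/andP/idP => [[]//|H]; split => //; apply/negP => /eqP; lia.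
  rewrite mem_iota in Hj.
  have -> : armlen l (x + j, y)%N = j by rewrite /armlen /= rl; lia.
  have -> : armlen nu (x + j, y)%N = j.-1 by rewrite /armlen /= rn; lia.
  have -> : leglen nu (x + j, y)%N = L1 l x y j.
    by rewrite /leglen /L1 /= (coll_ne Hc) //; lia.
  by rewrite prednK /D1 /L1 //; case/andP: Hj.
rewrite /hook_prob /= (main2 rl cl Hx Hy (j := v)); last by lia.
case: v Hv => [//|v] _; rewrite /F2 /=.
have -> : armlen nu (x, y + v.+1)%N = Q2 l x y v.+1.
  by rewrite /armlen /Q2 /= (rowl_ne Hc) //; lia.
have -> : leglen nu (x, y + v.+1)%N = v by rewrite /leglen /= cn; lia.
rewrite /E2; congr (_ * _).
rewrite /leg /= cl prednK // addKn big_map /= big_cons eqxx /=.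
symmetry; rewrite -[y.+1]addn1 iotaDl big_map /P2.
have -> : index_iota 1 v.+1 = iota 1 v by rewrite /index_iota subn1.
rewrite big_seq_cond [RHS]big_seq_cond; apply: eq_big => [j|j /andP[Hj _]].
  rewrite mem_iota xpair_eqE eqxx !andbT /=.
  by apply/andP/idP => [[]//|H]; split => //; apply/negP => /eqP; lia.
rewrite mem_iota in Hj.
have -> : leglen l (x, y + j)%N = j by rewrite /leglen /= cl; lia.
have -> : armlen nu (x, y + j)%N = Q2 l x y j.
  by rewrite /armlen /Q2 /= (rowl_ne Hc) //; lia.
have -> : leglen nu (x, y + j)%N = j.-1 by rewrite /leglen /= cn; lia.
by rewrite prednK //; case/andP: Hj.
Qed.
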